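(* Assume (A1) and (B2), and let $b_n$ be random vectors with $\|b_n-b\|=O_{\mathbb P}(r_n^{-1})$ for a deterministic sequence $r_n\to\infty$. Then $$d_H\big(OPT(b_n),OPT(b)\big)=O_{\mathbb P}(r_n^{-1}),$$ where $d_H(S,T)=\max\{\sup_{x\in S}\inf_{y\in T}\|x-y\|,\ \sup_{x\in T}\inf_{y\in S}\|x-y\|\}$ is the Hausdorff distance.
   Context: $A\in\mathbb{R}^{m\times d}$ has full rank $m\le d$, $b\in\mathbb{R}^m$, $c\in\mathbb{R}^d$. For $\beta\in\mathbb{R}^m$, $(\mathrm{P}_\beta)$ is $\min c^Tx$ s.t. $Ax=\beta$, $x\ge0$, and $OPT(\beta)$ is its set of optimal solutions. (A1): $OPT(b)$ is non-empty and bounded. (B2): $\mathbb{P}((\mathrm{P}_{b_n})\text{ has an optimal solution})\to1$. *)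

(* Defs.v *)
From mathcomp Require Import all_boot all_order all_algebra.
From mathcomp Require Import all_classical all_reals all_analysis.
Set Implicit Arguments. Unset Strict Implicit. Unset Printing Implicit Defensive.
Import Order.TTheory GRing.Theory Num.Theory.
Local Open Scope classical_set_scope.
Local Open Scope ring_scope.

Definition enorm (R : realType) (k : nat) (x : 'cV[R]_k) : R :=
  Num.sqrt (\sum_(i < k) x i 0 ^+ 2).

Definition feasible (R : realType) (m d : nat) (A : 'M[R]_(m, d))
  (beta : 'cV[R]_m) : set 'cV[R]_d :=
  [set x | A *m x = beta /\ forall i : 'I_d, 0 <= x i 0].

Definition obj (R : realType) (d : nat) (c x : 'cV[R]_d) : R :=
  \sum_(i < d) c i 0 * x i 0.

Definition OPT (R : realType) (m d : nat) (A : 'M[R]_(m, d)) (c : 'cV[R]_d)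
  (beta : 'cV[R]_m) : set 'cV[R]_d :=
  [set x | feasible A beta x /\
           forall y, feasible A beta y -> obj c x <= obj c y].

(* Hausdorff distance (extended-real valued; sup of empty = -oo,
   inf of empty = +oo). *)
Definition hausdorff (R : realType) (d : nat) (S T : set 'cV[R]_d) : \bar R :=
  maxe (ereal_sup [set ereal_inf [set (enorm (x - y))%:E | y in T] | x in S])
       (ereal_sup [set ereal_inf [set (enorm (x - y))%:E | y in S] | x in T]).

(* X_n = O_P(a_n), stated via inner probability (no measurability of X_n
   required): for every eps > 0 there are M > 0 and N such that for n >= N,
   X_n <= M a_n on a measurable event of probability >= 1 - eps. *)
Definition OP_bound (R : realType) (dO : measure_display) (Omega : measurableType dO)
  (P : probability Omega R) (X : nat -> Omega -> \bar R) (a : nat -> R) : Prop :=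
  forall eps : R, 0 < eps -> exists M : R, 0 < M /\ exists N : nat,
    forall n, (N <= n)%N -> exists E : set Omega, measurable E /\
      (P E >= (1 - eps)%:E)%E /\ forall w, E w -> (X n w <= (M * a n)%:E)%E.

(* Main.v *)
Require Import Defs.
From mathcomp Require Import all_boot all_order all_algebra.
From mathcomp Require Import all_classical all_reals all_analysis.
From mathcomp Require Import lra.
Import Order.TTheory GRing.Theory Num.Theory.
Local Open Scope classical_set_scope.
Local Open Scope ring_scope.
Set Implicit Arguments. Unset Strict Implicit. Unset Printing Implicit Defensive.


Definition n1 (R : realType) (k : nat) (v : 'cV[R]_k) : R := \sum_(i < k) `|v i 0|.

Lemma n1_ge0 (R : realType) k (v : 'cV[R]_k) : 0 <= n1 v.
Proof. by apply: sumr_ge0 => i _. Qed.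

Lemma n1_entry (R : realType) k (v : 'cV[R]_k) i : `|v i 0| <= n1 v.
Proof.
rewrite /n1 (bigD1 i) //= lerDl; by apply: sumr_ge0 => j _.
Qed.

Lemma n1D (R : realType) k (u v : 'cV[R]_k) : n1 (u + v) <= n1 u + n1 v.
Proof.
rewrite /n1 -big_split /=; apply: ler_sum => i _; rewrite mxE; exact: ler_normD.
Qed.

Lemma n1N (R : realType) k (v : 'cV[R]_k) : n1 (- v) = n1 v.
Proof. by rewrite /n1; apply: eq_bigr => i _; rewrite mxE normrN. Qed.

Lemma n1Z (R : realType) k (a : R) (v : 'cV[R]_k) : n1 (a *: v) = `|a| * n1 v.
Proof. by rewrite /n1 mulr_sumr; apply: eq_bigr => i _; rewrite mxE normrM. Qed.

Lemma n1B (R : realType) k (u v : 'cV[R]_k) : n1 (u - v) = n1 (v - u).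
Proof. by rewrite -n1N opprB. Qed.

Definition mxsum (R : realType) (p k : nat) (M : 'M[R]_(p, k)) : R :=
  \sum_(i < p) \sum_(j < k) `|M i j|.

Lemma n1_mul (R : realType) p k (M : 'M[R]_(p, k)) (v : 'cV[R]_k) :
  n1 (M *m v) <= mxsum M * n1 v.
Proof.
rewrite /n1 /mxsum mulr_suml; apply: ler_sum => i _; rewrite mxE mulr_suml.
apply: le_trans (ler_norm_sum _ _ _) _; apply: ler_sum => j _.
rewrite normrM; apply: ler_wpM2l => //; exact: n1_entry.
Qed.

Lemma obj_bound (R : realType) k (c z : 'cV[R]_k) : `|obj c z| <= n1 c * n1 z.
Proof.
rewrite /obj /n1 mulr_suml; apply: le_trans (ler_norm_sum _ _ _) _.
apply: ler_sum => j _; rewrite normrM; apply: ler_wpM2l => //; exact: n1_entry.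
Qed.

Lemma objD (R : realType) k (c u v : 'cV[R]_k) : obj c (u + v) = obj c u + obj c v.
Proof. by rewrite /obj -big_split; apply: eq_bigr => i _; rewrite mxE mulrDr. Qed.

Lemma objN (R : realType) k (c v : 'cV[R]_k) : obj c (- v) = - obj c v.
Proof. by rewrite /obj -sumrN; apply: eq_bigr => i _; rewrite mxE mulrN. Qed.

Lemma enorm_le_n1 (R : realType) k (v : 'cV[R]_k) : enorm v <= n1 v.
Proof.
rewrite /enorm -(ger0_norm (n1_ge0 v)) -sqrtr_sqr ler_sqrt ?exprn_ge0 ?n1_ge0 //.
rewrite [n1 v ^+ 2]expr2 mulr_suml; apply: ler_sum => i _.
rewrite -(real_normK (num_real (v i 0))) expr2.
by apply: ler_wpM2l => //; exact: n1_entry.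
Qed.

Lemma entry_le_enorm (R : realType) k (v : 'cV[R]_k) i : `|v i 0| <= enorm v.
Proof.
rewrite /enorm -sqrtr_sqr ler_sqrt; last by apply: sumr_ge0 => j _; rewrite sqr_ge0.
rewrite (bigD1 i) //= lerDl; by apply: sumr_ge0 => j _; rewrite sqr_ge0.
Qed.

Lemma n1_le_enorm (R : realType) k (v : 'cV[R]_k) : n1 v <= k%:R * enorm v.
Proof.
rewrite /n1; apply: le_trans (_ : \sum_(i < k) enorm v <= _).
  by apply: ler_sum => i _; exact: entry_le_enorm.
by rewrite sumr_const card_ord mulr_natl.
Qed.

Lemma fin_unif (R : realType) (T : finType) (Q : T -> R -> Prop) :
  (forall t D D', Q t D -> D <= D' -> Q t D') ->
  (forall t, exists D, 0 <= D /\ Q t D) -> exists D, 0 <= D /\ forall t, Q t D.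
Proof.
move=> mono H; have [f Hf] := choice H.
exists (\sum_t f t); split; first by apply: sumr_ge0 => t _; case: (Hf t).
move=> t; apply: mono (proj2 (Hf t)) _.
rewrite (bigD1 t) //= lerDl; by apply: sumr_ge0 => s _; case: (Hf s).
Qed.


Lemma n1_col_mx (R : realType) p q (u : 'cV[R]_p) (v : 'cV[R]_q) :
  n1 (col_mx u v) = n1 u + n1 v.
Proof.
rewrite /n1 big_split_ord /=; congr (_ + _); apply: eq_bigr => i _.
  by rewrite col_mxEu. by rewrite col_mxEd.
Qed.

Lemma n10 (R : realType) k : n1 (0 : 'cV[R]_k) = 0.
Proof. by rewrite /n1 big1 // => i _; rewrite mxE normr0. Qed.

Lemma mxsum_ge0 (R : realType) p k (M : 'M[R]_(p, k)) : 0 <= mxsum M.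
Proof. by apply: sumr_ge0 => i _; apply: sumr_ge0. Qed.

Lemma linalg_bound (R : realType) m d (A : 'M[R]_(m, d)) (S : {set 'I_d}) :
  (forall k : 'cV[R]_d, (forall i, i \notin S -> k i 0 = 0) -> A *m k = 0 -> k = 0) ->
  exists D, 0 <= D /\ forall w : 'cV[R]_d,
    (forall i, i \notin S -> w i 0 = 0) -> n1 w <= D * n1 (A *m w).
Proof.
move=> Hinj.
pose Q : 'M[R]_d := diag_mx (\row_i (if i \in S then 0 else 1)).
pose N := col_mx A Q.
have QE : forall v : 'cV[R]_d, forall i, (Q *m v) i 0 = (if i \in S then 0 else 1) * v i 0.
  by move=> v i; rewrite mul_diag_mx mxE mxE.
have Ninj : forall v : 'cV[R]_d, N *m v = 0 -> v = 0.
  move=> v; rewrite mul_col_mx -[0 : 'cV_(m + d)]col_mx0 => /eq_col_mx [HA HQ].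
  apply: Hinj HA => i iS.
  have := congr1 (fun M : 'cV[R]_d => M i 0) HQ; rewrite /= QE (negbTE iS) mul1r.
  by rewrite mxE.
have rf : row_full N.
  rewrite /row_full -mxrank_tr -/(row_free N^T) -kermx_eq0; apply/eqP.
  set K := kermx N^T.
  have HK : K *m N^T = 0 by apply/sub_kermxP.
  have HK' : N *m K^T = 0 by rewrite -[N]trmxK -trmx_mul HK trmx0.
  apply: trmx_inj; rewrite trmx0; apply/matrixP => i j.
  have H : col j K^T = 0 by apply: Ninj; rewrite colE mulmxA HK' mul0mx.
  have := congr1 (fun M : 'cV[R]_d => M i 0) H.
  by rewrite /= !mxE.
have [B HB] := row_fullP rf.
exists (mxsum B); split; first exact: mxsum_ge0.
move=> w wS.
have Qw : Q *m w = 0.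
  apply/matrixP => i j; rewrite (ord1 j) QE mxE.
  by case: ifP => [_|/negbT iS]; rewrite ?mul0r ?wS ?mulr0.
rewrite {1}(_ : w = B *m (N *m w)); last by rewrite mulmxA HB mul1mx.
apply: le_trans (n1_mul _ _) _.
by rewrite mul_col_mx Qw n1_col_mx n10 addr0.
Qed.

Local Close Scope classical_set_scope.


Definition sgP (R : realType) d (P : {set 'I_d}) (i : 'I_d) : R :=
  if i \in P then 1 else -1.

Definition face (R : realType) d (S P : {set 'I_d}) (w : 'cV[R]_d) : Prop :=
  forall i, (i \notin S -> w i 0 = 0) /\ (i \in S -> 0 <= sgP R P i * w i 0).

Lemma sgP_sq (R : realType) d (P : {set 'I_d}) i : sgP R P i * sgP R P i = 1.
Proof. by rewrite /sgP; case: ifP => _; rewrite ?mulr1 ?mulrNN ?mulr1. Qed.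

Lemma ratio_sg (R : realType) d (P : {set 'I_d}) i (w k : R) :
  w / k = (sgP R P i * w) / (sgP R P i * k).
Proof. by rewrite /sgP; case: ifP => _; rewrite ?mul1r // !mulN1r invrN mulrNN. Qed.

Lemma sgP_mulB (R : realType) d (P : {set 'I_d}) i (w k t : R) :
  sgP R P i * (w - t * k) = sgP R P i * w - t * (sgP R P i * k).
Proof. by rewrite mulrBr mulrCA. Qed.

Lemma norm_sg (R : realType) d (P : {set 'I_d}) i (w : R) :
  `|sgP R P i * w| = `|w|.
Proof. by rewrite normrM /sgP; case: ifP => _; rewrite ?normrN normr1 mul1r. Qed.

Lemma face_sub (R : realType) d (S S' P : {set 'I_d}) (w : 'cV[R]_d) :
  S' \subset S -> face S' P w -> face S P w.
Proof.
move=> sub fw i; have [h1 h2] := fw i; split.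
  by move=> iS; apply: h1; apply: contra iS => /(fintype.subsetP sub).
move=> iS; case: (boolP (i \in S')) => [/h2 //|/h1 ->]; by rewrite mulr0.
Qed.

Lemma exists_argmin (R : realType) (I : finType) (Pr : pred I) (F : I -> R) i0 :
  Pr i0 -> exists2 j, Pr j & forall i, Pr i -> F j <= F i.
Proof. by move=> Pi0; case: (arg_minP F Pi0) => j Pj H; exists j. Qed.

Lemma cardS_le0 d (S : {set 'I_d}) : (#|S| <= 0)%N -> S = finset.set0.
Proof. by rewrite leqn0 => /eqP /cards0_eq. Qed.

Lemma face0 (R : realType) d (P : {set 'I_d}) (w : 'cV[R]_d) :
  face finset.set0 P w -> w = 0.
Proof.
move=> fw; apply/matrixP => i j; rewrite (ord1 j) mxE.
by case: (fw i) => h _; apply: h; rewrite finset.in_set0.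
Qed.

Lemma cardD1_le d (S : {set 'I_d}) j n : j \in S -> (#|S| <= n.+1)%N -> (#|S :\ j| <= n)%N.
Proof. by move=> jS; rewrite (cardsD1 j S) jS. Qed.


Lemma not_face_neg (R : realType) d (S P : {set 'I_d}) (k : 'cV[R]_d) :
  (forall i, i \notin S -> k i 0 = 0) -> ~ face S P k ->
  exists2 i, i \in S & sgP R P i * k i 0 < 0.
Proof.
move=> kS nf; apply: contra_notP nf => H i; split; first exact: kS.
move=> iS; rewrite leNgt; apply/negP => lt; apply: H; by exists i.
Qed.

Lemma face_bound (R : realType) m d (A : 'M[R]_(m, d)) :
  exists D, 0 <= D /\ forall S P : {set 'I_d},
    (forall k, face S P k -> A *m k = 0 -> k = 0) ->
    forall w, face S P w -> n1 w <= D * n1 (A *m w).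
Proof.
suff H : forall n, exists D, 0 <= D /\ forall S P : {set 'I_d}, (#|S| <= n)%N ->
    (forall k, face S P k -> A *m k = 0 -> k = 0) ->
    forall w, face S P w -> n1 w <= D * n1 (A *m w).
  have [D [D0 HD]] := H d; exists D; split => // S P; apply: HD.
  by apply: leq_trans (max_card _) _; rewrite card_ord.
elim=> [|n [D0 [D0ge IH]]].
  exists 0; split => // S P /cardS_le0 -> _ w /face0 ->; by rewrite n10 mul0r.
pose Q (t : {set 'I_d} * {set 'I_d}) (D : R) := (#|t.1| <= n.+1)%N ->
    (forall k, face t.1 t.2 k -> A *m k = 0 -> k = 0) ->
    forall w, face t.1 t.2 w -> n1 w <= D * n1 (A *m w).
suff [D [Dge HD]] : exists D, 0 <= D /\ forall t, Q t D.
  exists D; split => // S P; exact: (HD (S, P)).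
apply: fin_unif.
- move=> t D1 D2 H1 le12 c hk w fw; apply: le_trans (H1 c hk w fw) _.
  by apply: ler_wpM2r => //; exact: n1_ge0.
- case=> S P; rewrite /Q /=.
  case: (leqP #|S| n) => [Sle|Sgt].
    by exists D0; split => // _ hk w fw; exact: IH Sle hk w fw.
  case: (pselect (forall k, face S P k -> A *m k = 0 -> k = 0)) => [hyp|nhyp]; last first.
    by exists 0; split => // _ /nhyp.
  case: (pselect (exists k : 'cV[R]_d, (forall i, i \notin S -> k i 0 = 0) /\ A *m k = 0 /\ k != 0)) => [[k [kS [Ak k0]]]|nok]; last first.
    have [D1 [D1ge HD1]] : exists D, 0 <= D /\ forall w : 'cV[R]_d,
       (forall i, i \notin S -> w i 0 = 0) -> n1 w <= D * n1 (A *m w).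
      apply: linalg_bound => k kS Ak;  apply/eqP; apply: contra_notP nok => k0; exists k; split => //; split => //.
      by apply/negP.
    exists D1; split => // _ _ w fw; apply: HD1 => i iS; by case: (fw i) => h _; apply: h.
  have [i0 i0S ki0] : exists2 i, i \in S & sgP R P i * k i 0 < 0.
    apply: not_face_neg => // fk; move: k0; by rewrite (hyp k fk Ak) eqxx.
  have [j1 j1S kj1] : exists2 i, i \in S & 0 < sgP R P i * k i 0.
    have [i iS H] : exists2 i, i \in S & sgP R P i * (- k) i 0 < 0.
      apply: not_face_neg.
        by move=> i iS; rewrite mxE kS // oppr0.
      move=> fk; have : - k = 0 by apply: hyp fk _; rewrite mulmxN Ak oppr0.
      by move/eqP; rewrite oppr_eq0 (negbTE k0).
    by exists i => //; move: H; rewrite mxE mulrN oppr_lt0.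
  have ki0n : 0 < `|k i0 0| by rewrite -(norm_sg P i0) normr_gt0 ltr0_neq0.
  pose c := n1 k / `|k i0 0|.
  have cge : 0 <= c by rewrite divr_ge0 // ?n1_ge0 // ltW.
  exists (D0 * (1 + c)); split; first by rewrite mulr_ge0 // addr_ge0.
  move=> Sle _ w fw.
  pose J := (fun j => (j \in S) && (0 < sgP R P j * k j 0)).
  have j1J : J j1 by rewrite /J j1S kj1.
  have [js jsJ jsmin] := @exists_argmin R _ J (fun j => w j 0 / k j 0) _ j1J.
  move: jsJ; rewrite /J => /andP [jsS kjs].
  pose t := w js 0 / k js 0.
  have tge : 0 <= t.
    rewrite /t (ratio_sg P js) divr_ge0 // ?(ltW kjs) //; by case: (fw js) => _ /(_ jsS).
  pose z := w - t *: k.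
  have zE : forall i, z i 0 = w i 0 - t * k i 0 by move=> i; rewrite !mxE.
  have fz : face (S :\ js) P z.
    move=> i; split.
      rewrite in_setD1 negb_and negbK => /orP [/eqP ->|iS].
        rewrite zE /t divfK //; first by rewrite subrr.
        by move: kjs; apply: contraTneq => ->; rewrite mulr0 ltxx.
      by rewrite zE kS // (proj1 (fw i) iS) mulr0 subrr.
    rewrite in_setD1 => /andP [_ iS].
    rewrite zE sgP_mulB; have := proj2 (fw i) iS.
    case: (leP (sgP R P i * k i 0) 0) => ski H.
      by rewrite subr_ge0; apply: le_trans H; apply: mulr_ge0_le0.
    have iJ : J i by rewrite /J iS ski.
    have := jsmin i iJ; rewrite -/t /= (ratio_sg P i) ler_pdivlMr // => H2.
    by rewrite subr_ge0.
  have Az : A *m z = A *m w by rewrite mulmxBr -scalemxAr Ak scaler0 subr0.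
  have hz : forall k', face (S :\ js) P k' -> A *m k' = 0 -> k' = 0.
    by move=> k' fk' Ak'; apply: hyp => //; apply: face_sub fk'; apply: subD1set.
  have nz := IH _ _ (cardD1_le jsS Sle) hz z fz.
  have tk : t * `|k i0 0| <= n1 z.
    apply: le_trans (n1_entry z i0); rewrite -(norm_sg P i0 (z i0 0)) zE sgP_mulB.
    rewrite -(norm_sg P i0 (k i0 0)) (ltr0_norm ki0).
    apply: le_trans (ler_norm _); have := proj2 (fw i0) i0S; lra.
  have wz : w = z + t *: k by rewrite /z subrK.
  rewrite {1}wz; apply: le_trans (n1D _ _) _; rewrite n1Z (ger0_norm tge).
  have : t * n1 k <= n1 z * c.
    rewrite /c mulrA ler_pdivlMr // mulrAC; apply: ler_wpM2r => //; exact: n1_ge0.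
  move=> tc; apply: le_trans (_ : n1 z * (1 + c) <= _).
    by rewrite mulrDr mulr1 lerD2l.
  rewrite -Az mulrAC; apply: ler_wpM2r => //; exact: addr_ge0.
Qed.


Definition inbox (R : realType) d (z w : 'cV[R]_d) : Prop :=
  forall i, 0 <= z i 0 * (w i 0 - z i 0).

Lemma inbox_trans (R : realType) d (z w' w : 'cV[R]_d) :
  inbox z w' -> inbox w' w -> inbox z w.
Proof.
move=> h1 h2 i; have := h1 i; have := h2 i.
set a := z i 0; set b := w' i 0; set c := w i 0 => hb ha.
case: (ltgtP b 0) => hb0.
- have ha0 : a <= 0 by rewrite leNgt; apply/negP => ap; nra.
  nra.
- have ha0 : 0 <= a by rewrite leNgt; apply/negP => ap; nra.
  nra.
- by move: ha; rewrite hb0; nra.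
Qed.

Lemma inbox_refl (R : realType) d (w : 'cV[R]_d) : inbox w w.
Proof. by move=> i; rewrite subrr mulr0. Qed.

Lemma face_sg (R : realType) d (S P : {set 'I_d}) (v : 'cV[R]_d) i :
  face S P v -> 0 <= sgP R P i * v i 0.
Proof.
move=> fv; case: (boolP (i \in S)) => [/(proj2 (fv i)) //|/(proj1 (fv i)) ->].
by rewrite mulr0.
Qed.

Lemma nonzero_entry (R : realType) d (k : 'cV[R]_d) : k != 0 -> exists i, k i 0 != 0.
Proof.
move=> k0; apply: contra_notP (negP k0) => H.
suff K : k = 0 by rewrite K eqxx.
apply/matrixP => i j.
rewrite (ord1 j) mxE; apply/eqP; apply: contra_notP H => H; by exists i; apply/negP.
Qed.

Lemma main_decomp (R : realType) m d (A : 'M[R]_(m, d)) :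
  exists C, 0 <= C /\ forall w : 'cV[R]_d,
    exists z, A *m z = A *m w /\ inbox z w /\ n1 z <= C * n1 (A *m w).
Proof.
have [D [Dge HD]] := face_bound A.
suff H : forall n, exists C, 0 <= C /\ forall S P : {set 'I_d}, (#|S| <= n)%N ->
    forall w, face S P w ->
    exists z, A *m z = A *m w /\ inbox z w /\ n1 z <= C * n1 (A *m w).
  have [C [C0 HC]] := H d; exists C; split => // w.
  apply: (HC [set i | w i 0 != 0] [set i | 0 < w i 0]).
    by apply: leq_trans (max_card _) _; rewrite card_ord.
  move=> i; split.
    by rewrite finset.inE negbK => /eqP.
  rewrite finset.inE => _; rewrite /sgP finset.inE.
  case: ifP => [/ltW|/negbT]; first by rewrite mul1r.
  by rewrite -leNgt mulN1r oppr_ge0.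
elim=> [|n [C0 [C0ge IH]]].
  exists 0; split => // S P /cardS_le0 -> w /face0 ->.
  by exists 0; split => //; split; [exact: inbox_refl | rewrite n10 mul0r].
pose Q (t : {set 'I_d} * {set 'I_d}) (C : R) := (#|t.1| <= n.+1)%N ->
    forall w, face t.1 t.2 w ->
    exists z, A *m z = A *m w /\ inbox z w /\ n1 z <= C * n1 (A *m w).
suff [C [Cge HC]] : exists C, 0 <= C /\ forall t, Q t C.
  exists C; split => // S P; exact: (HC (S, P)).
apply: fin_unif.
- move=> t C1 C2 H1 le12 c w fw; have [z [z1 [z2 z3]]] := H1 c w fw.
  exists z; split => //; split => //; apply: le_trans z3 _.
  by apply: ler_wpM2r => //; exact: n1_ge0.
- case=> S P; rewrite /Q /=.
  case: (leqP #|S| n) => [Sle|Sgt].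
    by exists C0; split => // _ w fw; exact: IH Sle w fw.
  case: (pselect (exists k : 'cV[R]_d, face S P k /\ A *m k = 0 /\ k != 0)) =>
    [[k [fk [Ak k0]]]|nok]; last first.
    exists D; split => // _ w fw; exists w; split => //; split; first exact: inbox_refl.
    apply: (HD S P) => // k fk Ak; apply/eqP; apply: contra_notP nok => k0.
    by exists k; split => //; split => //; apply/negP.
  exists C0; split => // Sle w fw.
  pose J := (fun j => (j \in S) && (k j 0 != 0)).
  have [j1 kj1] := nonzero_entry k0.
  have j1J : J j1.
    rewrite /J kj1 andbT; apply: contraNT kj1 => j1S; by rewrite (proj1 (fk j1) j1S).
  have [js jsJ jsmin] := @exists_argmin R _ J (fun j => w j 0 / k j 0) _ j1J.
  move: jsJ; rewrite /J => /andP [jsS kjs].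
  pose t := w js 0 / k js 0.
  have tge : 0 <= t.
    by rewrite /t (ratio_sg P js) divr_ge0 //; apply: face_sg.
  pose w' := w - t *: k.
  have wE : forall i, w' i 0 = w i 0 - t * k i 0 by move=> i; rewrite !mxE.
  have fw' : face (S :\ js) P w'.
    move=> i; split.
      rewrite in_setD1 negb_and negbK => /orP [/eqP ->|iS].
        by rewrite wE /t divfK // subrr.
      by rewrite wE (proj1 (fk i) iS) (proj1 (fw i) iS) mulr0 subrr.
    rewrite in_setD1 => /andP [_ iS].
    rewrite wE sgP_mulB; case: (eqVneq (k i 0) 0) => [->|ki0].
      by rewrite mulr0 mulr0 subr0; apply: face_sg fw.
    have iJ : J i by rewrite /J iS ki0.
    have := jsmin i iJ; rewrite -/t /= (ratio_sg P i).
    have ski : 0 < sgP R P i * k i 0.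
      rewrite lt_def (face_sg i fk) andbT mulf_eq0 negb_or ki0 andbT.
      by rewrite /sgP; case: ifP; rewrite ?oppr_eq0 oner_eq0.
    by rewrite ler_pdivlMr // => H2; rewrite subr_ge0.
  have bw' : inbox w' w.
    move=> i; rewrite -[w' i 0 * _]mul1r -(@sgP_sq R _ P i) mulrACA.
    apply: mulr_ge0; first exact: face_sg fw'.
    rewrite wE opprB addrC subrK mulrCA; apply: mulr_ge0 => //; exact: face_sg fk.
  have Aw' : A *m w' = A *m w by rewrite mulmxBr -scalemxAr Ak scaler0 subr0.
  have [z [Az [bz nz]]] := IH _ _ (cardD1_le jsS Sle) w' fw'.
  exists z; split; first by rewrite Az Aw'.
  split; first exact: inbox_trans bz bw'.
  by rewrite -Aw'.
Qed.


Lemma pos_step (R : realType) (x y z : R) :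
  0 <= x -> 0 <= y -> 0 <= z * ((y - x) - z) -> 0 <= x + z.
Proof.
move=> hx hy h; case: (leP 0 z) => hz; first exact: addr_ge0.
have : (y - x) - z <= 0.
  rewrite leNgt; apply/negP => p; have : z * ((y - x) - z) < 0 by rewrite nmulr_rlt0.
  by rewrite ltNge h.
lra.
Qed.

Lemma feas_step (R : realType) m d (A : 'M[R]_(m, d)) (C : R) :
  (forall w : 'cV[R]_d, exists z, A *m z = A *m w /\ inbox z w /\ n1 z <= C * n1 (A *m w)) ->
  forall beta beta' x y, feasible A beta x -> feasible A beta' y ->
  exists z, feasible A beta' (x + z) /\ n1 z <= C * n1 (beta' - beta).
Proof.
move=> HC beta beta' x y [Ax xp] [Ay yp].
have [z [Az [bz nz]]] := HC (y - x).
have Ayx : A *m (y - x) = beta' - beta by rewrite mulmxBr Ax Ay.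
exists z; split; last by rewrite -Ayx.
split; first by rewrite mulmxDr Az Ayx Ax addrC subrK.
move=> i; rewrite mxE; apply: pos_step (xp i) (yp i) _.
by have := bz i; rewrite !mxE.
Qed.

Lemma objB (R : realType) k (c u v : 'cV[R]_k) : obj c (u - v) = obj c u - obj c v.
Proof. by rewrite objD objN. Qed.

Lemma trmx_obj (R : realType) k (c v : 'cV[R]_k) : (c^T *m v) 0 0 = obj c v.
Proof. by rewrite mxE /obj; apply: eq_bigr => j _; rewrite mxE. Qed.

Lemma n1_1 (R : realType) (v : 'cV[R]_1) : n1 v = `|v 0 0|.
Proof. by rewrite /n1 big_ord1. Qed.

Lemma opt_lip (R : realType) m d (A : 'M[R]_(m, d)) (c : 'cV[R]_d) :
  exists L, 0 <= L /\ forall beta beta' x y, OPT A c beta x -> OPT A c beta' y ->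
    exists x', OPT A c beta' x' /\ n1 (x' - x) <= L * n1 (beta' - beta).
Proof.
have [C1 [C1ge HC1]] := main_decomp A.
have [C2 [C2ge HC2]] := main_decomp (col_mx A c^T).
exists (C2 * (1 + n1 c * C1)); split.
  by rewrite mulr_ge0 // addr_ge0 // mulr_ge0 // n1_ge0.
move=> beta beta' x y [fx ox] [fy oy].
have hobj : `|obj c y - obj c x| <= n1 c * C1 * n1 (beta' - beta).
  have [z1 [f1 n1z1]] := feas_step HC1 fx fy.
  have [z2 [f2 n1z2]] := feas_step HC1 fy fx.
  have h1 := oy _ f1; have h2 := ox _ f2.
  rewrite objD in h1; rewrite objD in h2.
  have b1 := obj_bound c z1; have b2 := obj_bound c z2.
  have e1 : n1 c * n1 z1 <= n1 c * C1 * n1 (beta' - beta).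
    by rewrite -mulrA; apply: ler_wpM2l => //; exact: n1_ge0.
  have e2 : n1 c * n1 z2 <= n1 c * C1 * n1 (beta' - beta).
    by rewrite -mulrA n1B; apply: ler_wpM2l => //; exact: n1_ge0.
  move: b1 b2; rewrite !ler_norml => /andP [? ?] /andP [? ?].
  apply/andP; split; lra.
have [z [Az [bz nz]]] := HC2 (y - x).
move: Az; rewrite !mul_col_mx => /eq_col_mx [Az cz].
have oz : obj c z = obj c y - obj c x.
  by rewrite -trmx_obj cz trmx_obj objB.
case: fx => Ax xp; case: fy => Ay yp.
exists (x + z); split.
  split.
    split; first by rewrite mulmxDr Az mulmxBr Ax Ay addrC subrK.
    move=> i; rewrite mxE; apply: pos_step (xp i) (yp i) _.
    by have := bz i; rewrite !mxE.
  by move=> y' fy'; rewrite objD oz addrC subrK; apply: oy.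
rewrite (addrC x z) addrK; apply: le_trans nz _.
rewrite mul_col_mx n1_col_mx n1_1 trmx_obj objB mulmxBr Ax Ay -mulrA.
apply: ler_wpM2l => //; rewrite mulrDl mul1r lerD2l; exact: hobj.
Qed.

Local Open Scope classical_set_scope.

Lemma haus_lip (R : realType) m d (A : 'M[R]_(m, d)) (c : 'cV[R]_d) :
  exists K, 0 <= K /\ forall beta beta', OPT A c beta !=set0 -> OPT A c beta' !=set0 ->
    (hausdorff (OPT A c beta) (OPT A c beta') <= (K * enorm (beta - beta'))%:E)%E.
Proof.
have [L [Lge HL]] := opt_lip A c.
exists (L * m%:R); split; first by rewrite mulr_ge0.
have side : forall b1 b2, OPT A c b2 !=set0 ->
   (ereal_sup [set ereal_inf [set (enorm (x - y))%:E | y in OPT A c b2] | x in OPT A c b1]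
     <= (L * m%:R * enorm (b1 - b2))%:E)%E.
  move=> b1 b2 [y Oy]; apply: ge_ereal_sup => e [x Ox <-].
  have [x' [Ox' nx']] := HL _ _ _ _ Ox Oy.
  have H : [set (enorm (x - y0))%:E | y0 in OPT A c b2] (enorm (x - x'))%:E by exists x'.
  apply: le_trans (ereal_inf_lbound H) _.
  rewrite lee_fin; apply: le_trans (enorm_le_n1 _) _.
  rewrite n1B; apply: le_trans nx' _; rewrite n1B -mulrA; apply: ler_wpM2l => //.
  exact: n1_le_enorm.
move=> b1 b2 h1 h2; rewrite /hausdorff ge_max; apply/andP; split; first exact: side.
have -> : enorm (b1 - b2) = enorm (b2 - b1).
  by rewrite /enorm; congr Num.sqrt; apply: eq_bigr => i _; rewrite -opprB mxE sqrrN mxE.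
exact: side.
Qed.


Lemma probE (R : realType) (dO : measure_display) (Omega : measurableType dO)
  (P : probability Omega R) (X : set Omega) : measurable X -> P X = (fine (P X))%:E.
Proof.
move=> mX; rewrite fineK // ge0_fin_numE ?measure_ge0 //.
apply: le_lt_trans (probability_le1 P mX) _; exact: ltry.
Qed.

Lemma prob_inter (R : realType) (dO : measure_display) (Omega : measurableType dO)
  (P : probability Omega R) (E1 E2 : set Omega) (a b : R) :
  measurable E1 -> measurable E2 -> (P E1 >= (1 - a)%:E)%E -> (P E2 >= (1 - b)%:E)%E ->
  (P (E1 `&` E2) >= (1 - (a + b))%:E)%E.
Proof.
move=> m1 m2 h1 h2.
have m12 : measurable (E1 `&` E2) by exact: measurableI.
have h : (P (~` (E1 `&` E2)) <= P (~` E1) + P (~` E2))%E.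
  by rewrite setCI; apply: measureU2; apply: measurableC.
rewrite !probability_setC // in h.
move: h h1 h2; rewrite (probE P m1) (probE P m2) (probE P m12).
rewrite -!EFinB -EFinD !lee_fin => h h1 h2; lra.
Qed.

Unset Implicit Arguments. Set Strict Implicit.

Theorem theorem3p4 (R : realType) (m d : nat) (A : 'M[R]_(m, d))
  (b : 'cV[R]_m) (c : 'cV[R]_d)
  (dO : measure_display) (Omega : measurableType dO) (P : probability Omega R)
  (bn : nat -> Omega -> 'cV[R]_m) (r : nat -> R) :
  (m <= d)%N -> \rank A = m ->
  (* (A1) *)
  OPT A c b !=set0 ->
  (exists K : R, forall x, OPT A c b x -> enorm x <= K) ->
  (* b_n are random vectors *)
  (forall n (i : 'I_m), measurable_fun setT (fun w => bn n w i 0)) ->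
  (* (B2): P((P_{b_n}) has an optimal solution) -> 1 *)
  (forall eps : R, 0 < eps -> exists N : nat, forall n, (N <= n)%N ->
     exists E : set Omega, measurable E /\ (P E >= (1 - eps)%:E)%E /\
       forall w, E w -> OPT A c (bn n w) !=set0) ->
  (r @ \oo --> +oo) ->
  OP_bound P (fun n w => (enorm (bn n w - b))%:E) (fun n => (r n)^-1) ->
  OP_bound P (fun n w => hausdorff (OPT A c (bn n w)) (OPT A c b))
          (fun n => (r n)^-1).
Proof.
move=> _ _ Ob _ _ B2 _ hOP eps eps0.
have [K [Kge HK]] := haus_lip A c.
have e2 : 0 < eps / 2 by rewrite divr_gt0.
have [M [M0 [N1 H1]]] := hOP _ e2.
have [N2 H2] := B2 _ e2.
exists ((K + 1) * M); split; first by rewrite mulr_gt0 // ltr_pwDr.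
exists (maxn N1 N2) => n; rewrite geq_max => /andP [n1 n2].
have [E1 [mE1 [pE1 hE1]]] := H1 n n1.
have [E2 [mE2 [pE2 hE2]]] := H2 n n2.
exists (E1 `&` E2); split; first exact: measurableI.
split.
  have := prob_inter mE1 mE2 pE1 pE2.
  by rewrite -splitr.
move=> w [w1 w2].
apply: le_trans (HK _ _ (hE2 w w2) Ob) _.
have h := hE1 w w1; rewrite /= lee_fin in h.
rewrite lee_fin -mulrA; apply: (@le_trans _ _ ((K + 1) * enorm (bn n w - b))).
  by apply: ler_wpM2r; [rewrite /enorm sqrtr_ge0 | rewrite lerDl].
by apply: ler_wpM2l => //; rewrite addr_ge0.
Qed.
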